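(* Let $0<\mu<1$, $\bar\mu=1-\mu$, $0\le\lambda<1$, and let $\theta(t)$ be the largest eigenvalue of $G_t=D_t[\gamma_1\gamma_1'+\lambda(I-\gamma_1\gamma_1')]D_t$, where $D_t=\mathrm{diag}(1,e^{t/2})$ and $\gamma_1=(\sqrt{\bar\mu},\sqrt\mu)'$. Define $I_\theta(x)=\sup_{t\in\mathbb R}\{tx-\log\theta(t)\}$. Then for every $x\in(0,1)$, with $\bar x=1-x$ and $\Delta=1+\dfrac{4\lambda x\bar x}{\mu\bar\mu(1-\lambda)^2}$, $$I_\theta(x)=-x\log\left[\frac{\mu+\bar\mu\lambda}{1-2\bar x/(\sqrt\Delta+1)}\right]-\bar x\log\left[\frac{\bar\mu+\mu\lambda}{1-2x/(\sqrt\Delta+1)}\right],$$ the supremum being attained at $t_0=\log\left[\dfrac{(\bar\mu+\mu\lambda)[\sqrt\Delta-(\bar x-x)]}{(\mu+\bar\mu\lambda)[\sqrt\Delta+(\bar x-x)]}\right]$.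
   Context: $I$ is the $2\times2$ identity matrix. $\theta(t)$ is the Perron eigenvalue governing the moment generating function of partial sums of the stationary two-state Markov chain on $\{0,1\}$ with transition matrix $\lambda I+(1-\lambda)\mathbf 1(\bar\mu,\mu)$, where $\mathbf 1=(1,1)'$. *)

(* Defs.v *)
From HB Require Import structures.
From mathcomp Require Import all_boot all_order all_algebra.
From mathcomp Require Import all_classical all_reals all_analysis.
Set Implicit Arguments. Unset Strict Implicit. Unset Printing Implicit Defensive.
Import Order.TTheory GRing.Theory Num.Theory.
Local Open Scope classical_set_scope.
Local Open Scope ring_scope.

Definition gamma1 (R : realType) (mu : R) : 'cV[R]_2 :=
  \col_(i < 2) (if i == ord0 then Num.sqrt (1 - mu) else Num.sqrt mu).

Definition Dmat (R : realType) (t : R) : 'M[R]_2 :=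
  diag_mx (\row_(i < 2) (if i == ord0 then 1 else expR (t / 2))).

Definition Gmat (R : realType) (mu lam t : R) : 'M[R]_2 :=
  let P := gamma1 mu *m (gamma1 mu)^T in
  Dmat t *m (P + lam *: (1%:M - P)) *m Dmat t.

Definition is_largest_eigenvalue (R : realType) (A : 'M[R]_2) (a : R) : Prop :=
  eigenvalue A a /\ (forall b : R, eigenvalue A b -> b <= a).

Definition I_theta (R : realType) (theta : R -> R) (x : R) : R :=
  sup (range (fun t : R => t * x - ln (theta t))).

(* Main.v *)
Require Import Defs.
From HB Require Import structures.
From mathcomp Require Import all_boot all_order all_algebra.
From mathcomp Require Import all_classical all_reals all_analysis.
From mathcomp Require Import ring lra.
Import Order.TTheory GRing.Theory Num.Theory.
Local Open Scope classical_set_scope.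
Local Open Scope ring_scope.

Lemma row2E (R : realType) (v : 'rV[R]_2) (A : 'M[R]_2) j :
  (v *m A) 0 j = v 0 ord0 * A ord0 j + v 0 ord_max * A ord_max j.
Proof.
rewrite mxE big_ord_recr /= big_ord_recr big_ord0 /= add0r.
by have -> : widen_ord (leqnSn 1) ord_max = ord0 :> 'I_2 by apply/val_inj.
Qed.

Lemma GmatE (R : realType) (mu lam t : R) i j :
  Gmat mu lam t i j =
  (if i == ord0 then 1 else expR (t / 2)) * (if j == ord0 then 1 else expR (t / 2)) *
  ((1 - lam) * ((if i == ord0 then Num.sqrt (1 - mu) else Num.sqrt mu) *
                (if j == ord0 then Num.sqrt (1 - mu) else Num.sqrt mu))
   + lam * (i == j)%:R).
Proof.
rewrite /Gmat /Dmat mul_diag_mx mul_mx_diag !mxE /gamma1.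
rewrite !big_ord1 !mxE.
ring.
Qed.

Lemma ord2 (j : 'I_2) : j = ord0 \/ j = ord_max.
Proof. by case: j => [[|[|]]] //= ?; [left|right]; apply/val_inj. Qed.

Lemma eig_char (R : realType) (A : 'M[R]_2) z :
  A ord0 ord_max = A ord_max ord0 ->
  eigenvalue A z ->
  (A ord0 ord0 - z) * (A ord_max ord_max - z) - A ord0 ord_max ^+ 2 = 0.
Proof.
move=> hs /eigenvalueP [v hv v0].
have e0 := congr1 (fun M : 'rV[R]_2 => M 0 ord0) hv.
have e1 := congr1 (fun M : 'rV[R]_2 => M 0 ord_max) hv.
move: e0 e1; rewrite /= !row2E !mxE => e0 e1.
set x0 := v 0 ord0 in e0 e1; set x1 := v 0 ord_max in e0 e1.
set D := _ - _ ^+ 2.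
rewrite -hs in e0.
have h0 : D * x0 = 0.
  have -> : D * x0 = (A ord_max ord_max - z) * ((x0 * A ord0 ord0 + x1 * A ord0 ord_max) - z * x0)
     - A ord0 ord_max * ((x0 * A ord0 ord_max + x1 * A ord_max ord_max) - z * x1) by rewrite /D; ring.
  by rewrite e0 e1 !subrr !mulr0 subrr.
have h1 : D * x1 = 0.
  have -> : D * x1 = (A ord0 ord0 - z) * ((x0 * A ord0 ord_max + x1 * A ord_max ord_max) - z * x1)
     - A ord0 ord_max * ((x0 * A ord0 ord0 + x1 * A ord0 ord_max) - z * x0) by rewrite /D; ring.
  by rewrite e0 e1 !subrr !mulr0 subrr.
case: (eqVneq D 0) => // dn0.
move: h0 h1 => /eqP; rewrite mulf_eq0 (negbTE dn0) /= => /eqP h0 /eqP.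
rewrite mulf_eq0 (negbTE dn0) /= => /eqP h1.
case/negP: v0; apply/eqP/rowP => j; rewrite mxE.
by case: (ord2 j) => ->.
Qed.

Lemma eig_exist (R : realType) (A : 'M[R]_2) z :
  A ord0 ord_max = A ord_max ord0 -> A ord0 ord_max != 0 ->
  (A ord0 ord0 - z) * (A ord_max ord_max - z) - A ord0 ord_max ^+ 2 = 0 ->
  eigenvalue A z.
Proof.
move=> hs hn hd; apply/eigenvalueP.
exists (\row_(j < 2) if j == ord0 then A ord_max ord0 else z - A ord0 ord0).
  apply/rowP => j; rewrite row2E !mxE /=.
  case: (ord2 j) => -> /=.
    ring.
  rewrite -hs; apply/eqP; rewrite -subr_eq0; apply/eqP; rewrite -[RHS]oppr0 -hd; ring.
apply/negP => /eqP /rowP /(_ ord0); rewrite !mxE /= -hs => /eqP.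
by rewrite (negbTE hn).
Qed.

Lemma root_le (R : realType) (T p th y : R) :
  th ^+ 2 - T * th + p = 0 -> T <= 2 * th -> y ^+ 2 - T * y + p <= 0 -> y <= th.
Proof.
move=> h1 h2 h3; rewrite leNgt; apply/negP => hy.
have : 0 < (y - th) * (y - (T - th)) by apply: mulr_gt0; lra.
have -> : (y - th) * (y - (T - th)) = y ^+ 2 - T * y + p.
  by rewrite -[X in _ = _ + X]subr0 -h1; ring.
lra.
Qed.

Lemma root_eq (R : realType) (T p th y : R) :
  th ^+ 2 - T * th + p = 0 -> T <= 2 * th -> y ^+ 2 - T * y + p = 0 -> T <= 2 * y -> y = th.
Proof.
move=> h1 h2 h3 h4; apply/eqP; rewrite eq_le (@root_le R T p th y h1 h2) ?h3 //.
by rewrite (@root_le R T p y th h3 h4) ?h1.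
Qed.

Section G.
Variables (R : realType) (mu lam t : R).
Hypothesis (hmu0 : 0 < mu) (hmu1 : mu < 1).
Let a := 1 - mu + mu * lam.
Let b := mu + (1 - mu) * lam.
Let c := expR (t / 2) * ((1 - lam) * (Num.sqrt (1 - mu) * Num.sqrt mu)).
Let sq1 : Num.sqrt (1 - mu) * Num.sqrt (1 - mu) = 1 - mu.
Proof. by rewrite -expr2 sqr_sqrtr // subr_ge0 ltW. Qed.
Let sq2 : Num.sqrt mu * Num.sqrt mu = mu.
Proof. by rewrite -expr2 sqr_sqrtr // ltW. Qed.

Lemma G00 : Gmat mu lam t ord0 ord0 = a.
Proof. by rewrite GmatE /= sq1 /a; ring. Qed.
Lemma G01 : Gmat mu lam t ord0 ord_max = c.
Proof. by rewrite GmatE /= /c; ring. Qed.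
Lemma G10 : Gmat mu lam t ord_max ord0 = c.
Proof. by rewrite GmatE /= /c; ring. Qed.
Lemma G11 : Gmat mu lam t ord_max ord_max = expR t * b.
Proof.
rewrite GmatE /= sq2 /b.
have -> : expR t = expR (t/2) * expR (t/2) by rewrite -expRD; congr expR; field.
ring.
Qed.
Lemma c2 : c ^+ 2 = expR t * (mu * (1 - mu) * (1 - lam) ^+ 2).
Proof.
rewrite /c !exprMn !sqr_sqrtr ?subr_ge0 ?ltW //.
have -> : expR t = expR (t/2) ^+ 2 by rewrite expr2 -expRD; congr expR; field.
ring.
Qed.

Hypothesis (hl0 : 0 <= lam) (hl1 : lam < 1).

Lemma theta_char th : is_largest_eigenvalue (Gmat mu lam t) th ->
  th ^+ 2 - (a + expR t * b) * th + lam * expR t = 0 /\ a + expR t * b <= 2 * th.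
Proof.
case=> he hmax.
have Kab : a * b - mu * (1 - mu) * (1 - lam) ^+ 2 = lam by rewrite /a /b; ring.
have hs : Gmat mu lam t ord0 ord_max = Gmat mu lam t ord_max ord0 by rewrite G01 G10.
have eq1 : th ^+ 2 - (a + expR t * b) * th + lam * expR t = 0.
  have := @eig_char _ _ _ hs he; rewrite G00 G11 G01 c2 => h0.
  rewrite -[RHS]h0 -[in LHS]Kab; ring.
split => //.
set T := a + expR t * b.
set S := Num.sqrt (T ^+ 2 - 4 * lam * expR t).
have dpos : 0 <= T ^+ 2 - 4 * lam * expR t.
  have -> : T ^+ 2 - 4 * lam * expR t = (a - expR t * b) ^+ 2 + 4 * (expR t * (mu * (1 - mu) * (1 - lam) ^+ 2)).
    by rewrite -[in LHS]Kab /T; ring.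
  apply: addr_ge0; first exact: sqr_ge0.
  apply: mulr_ge0 => //; apply: mulr_ge0; first exact: ltW (expR_gt0 _).
  apply: mulr_ge0; last exact: sqr_ge0.
  by apply: mulr_ge0; [exact: ltW|rewrite subr_ge0 ltW].
have S2 : S ^+ 2 = T ^+ 2 - 4 * lam * expR t by rewrite sqr_sqrtr.
have S0 : 0 <= S by exact: sqrtr_ge0.
have cn0 : c != 0.
  rewrite /c; apply/lt0r_neq0/mulr_gt0; first exact: expR_gt0.
  apply: mulr_gt0; first by rewrite subr_gt0.
  by apply: mulr_gt0; rewrite sqrtr_gt0 // subr_gt0.
have hr : eigenvalue (Gmat mu lam t) ((T + S) / 2).
  apply: eig_exist => //; first by rewrite G01.
  rewrite G00 G11 G01 c2.
  have -> : expR t * (mu * (1 - mu) * (1 - lam) ^+ 2) = expR t * (a * b) - lam * expR t by rewrite -[in RHS]Kab; ring.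
  have -> : a = T - expR t * b by rewrite /T; ring.
  rewrite -/T.
  have : ((T + S) / 2) ^+ 2 - T * ((T + S) / 2) + lam * expR t = 0.
    have -> : ((T + S) / 2) ^+ 2 - T * ((T + S) / 2) + lam * expR t = (S ^+ 2 - T ^+ 2 + 4 * lam * expR t) / 4 by field.
    by rewrite S2; field.
  move=> <-; ring.
have := hmax _ hr; lra.
Qed.
End G.

Lemma expR_conv (R : realType) (x d : R) : 0 <= x -> x <= 1 ->
  expR (x * d) <= 1 - x + x * expR d.
Proof.
move=> x0 x1; set m := x * d.
have h1 : expR m * (1 + (d - m)) <= expR d.
  have -> : expR d = expR m * expR (d - m) by rewrite -expRD; congr expR; ring.
  by rewrite ler_wpM2l ?expR_ge1Dx ?expR_ge0.
have h2 : expR m * (1 + - m) <= 1.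
  have e : expR m * expR (- m) = 1 by rewrite -expRD subrr expR0.
  by rewrite -[X in _ <= X]e ler_wpM2l ?expR_ge1Dx ?expR_ge0.
have -> : expR m = x * (expR m * (1 + (d - m))) + (1 - x) * (expR m * (1 + - m)).
  rewrite /m; ring.
have := ler_wpM2l x0 h1; have := ler_wpM2l (x:=1-x) _ h2.
rewrite subr_ge0 => /(_ x1); lra.
Qed.

Lemma lnMD (R : realType) (a b c : R) : 0 < a -> 0 < b -> 0 < c ->
  ln (a * b / c) = ln a + ln b - ln c.
Proof.
move=> a0 b0 c0; rewrite ln_div ?posrE ?mulr_gt0 // lnM ?posrE //.
Qed.

Theorem mainTheorem3 (R : realType) (mu lam : R) (theta : R -> R) :
  0 < mu < 1 -> 0 <= lam < 1 ->
  (forall t : R, is_largest_eigenvalue (Gmat mu lam t) (theta t)) ->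
  forall x : R, 0 < x < 1 ->
  let mub := 1 - mu in
  let xb := 1 - x in
  let Delta := 1 + 4 * lam * x * xb / (mu * mub * (1 - lam) ^+ 2) in
  let value :=
    - x * ln ((mu + mub * lam) / (1 - 2 * xb / (Num.sqrt Delta + 1)))
    - xb * ln ((mub + mu * lam) / (1 - 2 * x / (Num.sqrt Delta + 1))) in
  let t0 := ln (((mub + mu * lam) * (Num.sqrt Delta - (xb - x)))
               / ((mu + mub * lam) * (Num.sqrt Delta + (xb - x)))) in
  I_theta theta x = value /\ t0 * x - ln (theta t0) = value.
Proof.
move=> /andP[mu0 mu1] /andP[l0 l1] H x /andP[x0 x1] mub xb Delta value t0.
have TC t := @theta_char R mu lam t mu0 mu1 l1 _ (H t).
have mul0 := mulr_ge0 (ltW mu0) l0.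
set A := mub + mu * lam.
set B := mu + mub * lam.
set K := mu * mub * (1 - lam) ^+ 2.
have A0 : 0 < A by rewrite /A /mub; lra.
have mul1 : 0 <= (1 - mu) * lam by apply: mulr_ge0 => //; lra.
have B0 : 0 < B by rewrite /B /mub; lra.
have K0 : 0 < K by rewrite /K /mub; apply: mulr_gt0; [apply: mulr_gt0; lra| apply: exprn_gt0; lra].
have ABK : A * B - lam = K by rewrite /A /B /K /mub; ring.
have D1 : 1 <= Delta.
  rewrite /Delta -/K lerDl; apply: divr_ge0 => //; last exact: ltW.
  rewrite /xb; apply: mulr_ge0; last lra; apply: mulr_ge0; last lra; lra.
set r := Num.sqrt Delta.
have r2 : r ^+ 2 = Delta by rewrite sqr_sqrtr //; lra.
have r1 : 1 <= r by rewrite -sqrtr1 ler_sqrt; lra.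
have rK : (r ^+ 2 - 1) * K = 4 * lam * x * xb.
  rewrite r2 /Delta -/K; field; exact: lt0r_neq0.
set P := r - (xb - x).
set Q := r + (xb - x).
have P0 : 0 < P by rewrite /P /xb; lra.
have Q0 : 0 < Q by rewrite /Q /xb; lra.
have hPQ : lam * (P * Q) = A * B * (r ^+ 2 - 1).
  have -> : A * B = K + lam by rewrite -ABK; ring.
  have -> : lam * (P * Q) = lam * (r ^+ 2 - 1) + 4 * lam * x * xb by rewrite /P /Q /xb; ring.
  by rewrite -rK; ring.
set s0 := A * P / (B * Q).
have s00 : 0 < s0 by rewrite /s0; apply: divr_gt0; apply: mulr_gt0.
have et0 : expR t0 = s0 by rewrite /t0 -/r -/A -/B -/P -/Q lnK.
set th0 := A * (r + 1) / Q.
have th00 : 0 < th0 by rewrite /th0; apply: divr_gt0 => //; apply: mulr_gt0 => //; lra.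
have Bn0 : B != 0 by exact: lt0r_neq0.
have Qn0 : Q != 0 by exact: lt0r_neq0.
have rn0 : r + 1 != 0 by apply: lt0r_neq0; lra.
have An0 : A != 0 by exact: lt0r_neq0.
have PQ2 : P + Q = 2 * r by rewrite /P /Q; ring.
have q0 : th0 ^+ 2 - (A + s0 * B) * th0 + lam * s0 = 0.
  have -> : th0 ^+ 2 - (A + s0 * B) * th0 + lam * s0 =
     (A ^+ 2 * B * ((r + 1) ^+ 2 - (P + Q) * (r + 1)) + A * (lam * (P * Q))) / (B * Q ^+ 2).
    by rewrite /th0 /s0; field; rewrite Bn0 Qn0.
  rewrite hPQ PQ2.
  have -> : A ^+ 2 * B * ((r + 1) ^+ 2 - 2 * r * (r + 1)) + A * (A * B * (r ^+ 2 - 1)) = 0 by ring.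
  by rewrite mul0r.
have q1 : A + s0 * B <= 2 * th0.
  have -> : A + s0 * B = A * (P + Q) / Q by rewrite /s0; field; rewrite Bn0 Qn0.
  rewrite PQ2.
  have -> : 2 * th0 = A * (2 * r) / Q + 2 * A / Q by rewrite /th0; field.
  by rewrite lerDl; apply: divr_ge0; [apply: mulr_ge0 => //; exact: ltW|exact: ltW].
have theq : theta t0 = th0.
  have [e1 e2] := TC t0; rewrite et0 in e1 e2.
  exact: (@root_eq R (A + s0 * B) (lam * s0) th0 (theta t0) q0 q1 e1 e2).
have hP : 1 - 2 * xb / (r + 1) = P / (r + 1) by rewrite /P /xb; field.
have hQ : 1 - 2 * x / (r + 1) = Q / (r + 1) by rewrite /Q /xb; field.
have r10 : 0 < r + 1 by lra.
have hv : value = - x * (ln B + ln (r + 1) - ln P) - xb * (ln A + ln (r + 1) - ln Q).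
  rewrite /value -/r -/A -/B hP hQ.
  have -> : B / (P / (r + 1)) = B * (r + 1) / P by field; rewrite rn0 /= lt0r_neq0.
  have -> : A / (Q / (r + 1)) = A * (r + 1) / Q by field; rewrite rn0 /= lt0r_neq0.
  by rewrite !lnMD.
have ht0 : t0 = ln A + ln P - (ln B + ln Q).
  by rewrite /t0 -/r -/A -/B -/P -/Q ln_div ?posrE ?mulr_gt0 // !lnM ?posrE.
have hth0 : ln th0 = ln A + ln (r + 1) - ln Q by rewrite /th0 lnMD.
have main2 : t0 * x - ln (theta t0) = value.
  by rewrite theq hv ht0 hth0 /xb; ring.
have bound : forall t, t * x - ln (theta t) <= value.
  move=> t.
  set d := t - t0.
  set E1 := expR (x * d).
  set E2 := expR ((1 - x) * d).
  set ed := expR d.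
  have eE : ed = E1 * E2 by rewrite /ed /E1 /E2 -expRD; congr expR; ring.
  have es : expR t = s0 * ed by rewrite /ed -et0 -expRD /d; congr expR; ring.
  set k := lam * s0 / th0.
  have k0 : 0 <= k by rewrite /k; apply: divr_ge0; [apply: mulr_ge0 => //; exact: ltW| exact: ltW].
  have I12 : th0 + k = A + s0 * B.
    apply: (mulIf (lt0r_neq0 th00)).
    have -> : (th0 + k) * th0 = th0 ^+ 2 + lam * s0 by rewrite /k; field; exact: lt0r_neq0.
    lra.
  have I2 : th0 * x + k * (1 - x) = s0 * B.
    apply/eqP; rewrite -subr_eq0; apply/eqP.
    have -> : th0 * x + k * (1 - x) - s0 * B =
      (x * A * B * (r + 1) ^+ 2 + (1 - x) * (lam * (P * Q)) - A * B * P * (r + 1)) / (B * Q * (r + 1)).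
      by rewrite /k /th0 /s0; field; rewrite An0 Bn0 Qn0 rn0.
    rewrite hPQ.
    have -> : x * A * B * (r + 1) ^+ 2 + (1 - x) * (A * B * (r ^+ 2 - 1)) - A * B * P * (r + 1) = 0.
      by rewrite /P /xb; ring.
    by rewrite mul0r.
  have I1 : th0 * (1 - x) + k * x = A by lra.
  set y := th0 * E1.
  have hy : y ^+ 2 - (A + expR t * B) * y + lam * expR t = th0 * E1 * (th0 * E1 + k * E2 - A - s0 * B * ed).
    rewrite es eE /y /k; field; exact: lt0r_neq0.
  have c1 : E1 <= 1 - x + x * ed by apply: expR_conv; lra.
  have c2 : E2 <= 1 - (1 - x) + (1 - x) * ed by apply: expR_conv; lra.
  have c1' := ler_wpM2l (ltW th00) c1.
  have c2' := ler_wpM2l k0 c2.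
  have I2e : th0 * x * ed + k * (1 - x) * ed = s0 * B * ed by rewrite -I2; ring.
  have br : th0 * E1 + k * E2 - A - s0 * B * ed <= 0 by lra.
  have hq : y ^+ 2 - (A + expR t * B) * y + lam * expR t <= 0.
    rewrite hy; apply: mulr_ge0_le0 => //; apply: mulr_ge0; [exact: ltW | exact: expR_ge0].
  have [e1 e2] := TC t.
  have yle : y <= theta t := (@root_le R (A + expR t * B) (lam * expR t) (theta t) y e1 e2 hq).
  have y0 : 0 < y by rewrite /y mulr_gt0 // expR_gt0.
  have hl : ln y <= ln (theta t) by rewrite ler_ln ?posrE //; exact: lt_le_trans yle.
  have lny : ln y = ln th0 + x * d by rewrite /y lnM ?posrE ?expR_gt0 // expRK.
  have xd : x * d = x * t - x * t0 by rewrite /d; ring.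
  move: main2; rewrite theq => m2.
  lra.
have ne : range (fun t => t * x - ln (theta t)) !=set0 by exists (t0 * x - ln (theta t0)), t0.
have ub : ubound (range (fun t => t * x - ln (theta t))) value.
  by move=> _ [t _ <-]; exact: bound.
split => //.
apply/eqP; rewrite eq_le; apply/andP; split.
  by rewrite /I_theta; apply: ge_sup.
apply: sup_upper_bound; first by split => //; exists value.
by exists t0.
Qed.
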